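(* Let $(\eta_\ell)_{\ell\in\mathbb{N}}\subseteq[0,\infty)$ and let $D:\mathbb{N}\to(1,\infty)$ satisfy $\sum_{k=\ell}^{\ell+N}\eta_k^2\le D(N)\eta_\ell^2$ for all $\ell,N\in\mathbb{N}$. Suppose there exists $N_0\in\mathbb{N}$ with $$q_{\log}:=\log(D(N_0))-\sum_{j=1}^{N_0}D(j)^{-1}<0,$$ and suppose $(\eta_\ell)$ is quasi-monotone: there is $C_{\rm mon}>0$ with $\eta_{\ell+k}^2\le C_{\rm mon}\eta_\ell^2$ for all $\ell,k\in\mathbb{N}$. Then, with $q:=\exp(q_{\log}/N_0)<1$ and $C:=C_{\rm mon}\exp(-q_{\log})$, $$\eta_{\ell+k}^2\le C q^k\eta_\ell^2\quad\text{for all }k,\ell\in\mathbb{N}.$$ *)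

(* Defs.v *)
From Stdlib Require Import Reals.
Open Scope R_scope.

Fixpoint sum_1_to (f : nat -> R) (n : nat) : R :=
  match n with
  | O => 0
  | S m => sum_1_to f m + f (S m)
  end.

Definition qlog (D : nat -> R) (N0 : nat) : R :=
  ln (D N0) - sum_1_to (fun j => / D j) N0.

(* Main.v *)
Require Import Defs.
From Stdlib Require Import Reals Lra Lia FunctionalExtensionality.
Open Scope R_scope.

Lemma exp_mono x y : x <= y -> exp x <= exp y.
Proof. intros [H|H]; [left; now apply exp_increasing | subst; lra]. Qed.

Lemma exp_pow_n x n : exp x ^ n = exp (INR n * x).
Proof.
  induction n as [|n IH]. rewrite pow_O, Rmult_0_l, exp_0; lra.
  rewrite <- tech_pow_Rmult, IH, <- exp_plus, S_INR. f_equal. ring.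
Qed.

Section S.
Variables (eta D : nat -> R) (N0 : nat).
Hypothesis (hD : forall N, 1 < D N)
  (hsum : forall l N, sum_f_R0 (fun i => (eta (l + i)%nat) ^ 2) N <= D N * (eta l) ^ 2)
  (heta : forall l, 0 <= eta l).

Let s := sum_1_to (fun j => / D j).

Lemma tail_bound l : forall j, (j <= N0)%nat ->
  sum_f_R0 (fun i => (eta (l + j + i)%nat) ^ 2) (N0 - j)
    <= exp (s (N0 - j) - s N0) * D N0 * eta l ^ 2.
Proof.
  induction j as [|j IH]; intros Hj.
  - rewrite Nat.sub_0_r, Rminus_diag, exp_0, Rmult_1_l.
    replace (fun i => eta (l + 0 + i)%nat ^ 2) with (fun i => eta (l + i)%nat ^ 2).
    apply hsum. apply functional_extensionality; intro i; now rewrite Nat.add_0_r.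
  - specialize (IH ltac:(lia)).
    set (n := (N0 - S j)%nat).
    assert (En : (N0 - j = S n)%nat) by (unfold n; lia).
    rewrite En in IH.
    rewrite decomp_sum in IH by lia. simpl Init.Nat.pred in IH.
    pose proof (hsum (l + j)%nat (S n)) as H1.
    rewrite decomp_sum in H1 by lia. simpl Init.Nat.pred in H1.
    replace (fun i => eta (l + S j + i)%nat ^ 2) with (fun i => eta (l + j + S i)%nat ^ 2)
      by (apply functional_extensionality; intro i; f_equal; f_equal; lia).
    replace (l + j + 0)%nat with (l + j)%nat in IH, H1 by lia.
    set (T := sum_f_R0 (fun i => eta (l + j + S i)%nat ^ 2) n) in *.
    set (a := eta (l + j)%nat ^ 2) in *.
    set (d := D (S n)) in *.
    assert (hd : 1 < d) by apply hD.
    assert (hs : s (S n) = s n + / d) by reflexivity.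
    rewrite hs in IH.
    set (B := exp (s n - s N0) * D N0 * eta l ^ 2).
    assert (hB : 0 <= B).
    { unfold B. pose proof (exp_pos (s n - s N0)). pose proof (hD N0).
      pose proof (pow2_ge_0 (eta l)). apply Rmult_le_pos; [|lra]. nra. }
    assert (Hexp : exp (s n + / d - s N0) * D N0 * eta l ^ 2 = exp (/ d) * B).
    { unfold B. replace (s n + / d - s N0) with (/ d + (s n - s N0)) by ring.
      rewrite exp_plus; ring. }
    rewrite Hexp in IH.
    pose proof (exp_ineq1_le (- / d)) as E1.
    assert (E2 : exp (- / d) * exp (/ d) = 1) by (rewrite <- exp_plus, Rplus_opp_l; apply exp_0).
    assert (hid : 0 < / d < 1).
    { split. apply Rinv_0_lt_compat; lra. rewrite <- Rinv_1. apply Rinv_lt_contravar; lra. }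
    assert (HT : T <= (1 - / d) * (a + T)).
    { assert (d * T <= (d - 1) * (a + T)) by nra.
      replace ((1 - / d) * (a + T)) with (/ d * ((d - 1) * (a + T))) by (field; lra).
      replace T with (/ d * (d * T)) at 1 by (field; lra).
      apply Rmult_le_compat_l; lra. }
    assert (HT2 : (1 - / d) * (a + T) <= exp (- / d) * (exp (/ d) * B)).
    { apply Rmult_le_compat; try lra.
      assert (0 <= a) by apply pow2_ge_0.
      assert (0 <= T).
      { unfold T. apply cond_pos_sum. intro; apply pow2_ge_0. }
      lra. }
    rewrite <- Rmult_assoc, E2, Rmult_1_l in HT2. lra.
Qed.

Lemma step l : eta (l + N0)%nat ^ 2 <= exp (qlog D N0) * eta l ^ 2.
Proof.
  pose proof (tail_bound l N0 (le_n _)) as H.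
  rewrite Nat.sub_diag in H. simpl sum_f_R0 in H.
  rewrite Nat.add_0_r in H.
  replace (exp (qlog D N0)) with (exp (s 0 - s N0) * D N0). exact H.
  unfold qlog. fold s. simpl (s 0).
  replace (ln (D N0) - s N0) with (ln (D N0) + (0 - s N0)) by ring.
  rewrite exp_plus, exp_ln by (pose proof (hD N0); lra). replace (s 0%nat) with 0 by reflexivity. ring.
Qed.
End S.

Theorem mainTheorem3 (eta : nat -> R) (D : nat -> R) (N0 : nat) (Cmon : R)
  (heta : forall l, 0 <= eta l)
  (hD : forall N, 1 < D N)
  (hsum : forall l N, sum_f_R0 (fun i => (eta (l + i)%nat) ^ 2) N <= D N * (eta l) ^ 2)
  (hq : qlog D N0 < 0)
  (hCmon : 0 < Cmon)
  (hmon : forall l k, (eta (l + k)%nat) ^ 2 <= Cmon * (eta l) ^ 2) :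
  forall k l,
    (eta (l + k)%nat) ^ 2
      <= (Cmon * exp (- qlog D N0)) * (exp (qlog D N0 / INR N0)) ^ k * (eta l) ^ 2.
Proof.
  intros k l.
  set (ql := qlog D N0) in *.
  assert (HN0 : (0 < N0)%nat).
  { destruct N0; [|lia]. exfalso. unfold ql, qlog in hq. simpl in hq.
    pose proof (hD 0%nat). assert (0 < ln (D 0%nat)) by (rewrite <- ln_1; apply ln_increasing; lra). lra. }
  pose proof (step eta D N0 hD hsum) as Hs. fold ql in Hs.
  assert (Hm : forall m l, eta (l + m * N0)%nat ^ 2 <= exp ql ^ m * eta l ^ 2).
  { induction m as [|m IH]; intro l'.
    - rewrite Nat.mul_0_l, pow_O, Nat.add_0_r; lra.
    - replace (l' + S m * N0)%nat with ((l' + m * N0) + N0)%nat by lia.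
      apply Rle_trans with (exp ql * eta (l' + m * N0)%nat ^ 2). apply Hs.
      pose proof (exp_pos ql). specialize (IH l').
      rewrite <- (tech_pow_Rmult (exp ql) m), Rmult_assoc.
      apply Rmult_le_compat_l; lra. }
  set (m := (k / N0)%nat). set (r := (k mod N0)%nat).
  assert (Hk : k = (m * N0 + r)%nat) by (unfold m, r; pose proof (Nat.div_mod k N0); lia).
  assert (Hr : (r < N0)%nat) by (apply Nat.mod_upper_bound; lia).
  replace (l + k)%nat with ((l + m * N0) + r)%nat by lia.
  apply Rle_trans with (Cmon * eta (l + m * N0)%nat ^ 2). apply hmon.
  apply Rle_trans with (Cmon * (exp ql ^ m * eta l ^ 2)).
  apply Rmult_le_compat_l; [lra | apply Hm].
  rewrite (exp_pow_n ql m), (exp_pow_n (ql / INR N0) k).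
  replace (Cmon * exp (- ql) * exp (INR k * (ql / INR N0)) * eta l ^ 2)
    with (Cmon * ((exp (- ql) * exp (INR k * (ql / INR N0))) * eta l ^ 2)) by ring.
  apply Rmult_le_compat_l. lra.
  apply Rmult_le_compat_r. apply pow2_ge_0.
  rewrite <- exp_plus. apply exp_mono.
  assert (HkR : INR k < (INR m + 1) * INR N0).
  { rewrite <- S_INR, <- mult_INR. apply lt_INR. lia. }
  assert (HN0R : 0 < INR N0) by (apply lt_0_INR; lia).
  assert (Ht : INR k / INR N0 <= INR m + 1).
  { apply Rmult_le_reg_r with (INR N0); auto. unfold Rdiv. rewrite Rmult_assoc, Rinv_l by lra. lra. }
  replace (INR k * (ql / INR N0)) with (ql * (INR k / INR N0)) by (field; lra).
  nra.
Qed.
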